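(* Let $N\in\mathbb{N}$, $d\in\mathbb{N}$, and let $b_1,\dots,b_d\in\{\lceil N^{1/2}/\sqrt{2}\rceil,\dots,\lfloor N^{1/2}\rfloor\}$ be coprime to $N$ with $b_{i+1}=b_i+1$ for $1\le i<d$. Set $D:=b_1+\lfloor N/b_d\rfloor$. For each $i$ write the $b_i$-adic digit polynomial of $N$ as $P_{b_i}=n_{2,i}X^2+n_{1,i}X+n_{0,i}$ (i.e. $n_{k,i}$ is the coefficient of $X^k$ in $P_{b_i}$). Suppose $\gcd(D+z,N)=1$ for every $z\in\{0,\dots,2d-2\}$ and $n_{1,i}\le n_{0,i}+1$ for every $i$. Then $\gcd(n_{2,i}b_i,N)=1$ for every $i$, and, defining $b_{d+i}:=n_{0,i}\cdot n_{2,i}^{-1}\cdot b_i^{-1}\bmod N$ for $1\le i\le d$, we have $\gcd(b_j-b_k,N)=1$ for all $j,k\in\{1,\dots,2d\}$ with $j\neq k$.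
   Context: For an integer $b\ge 2$, if $N=\sum_{i\ge0}n_ib^i$ is the unique base-$b$ representation of $N$ with digits $n_i\in\{0,\dots,b-1\}$, the $b$-adic digit polynomial of $N$ is $P_b:=\sum_{i\ge0}n_iX^i\in\mathbb{Z}[X]$. *)

(* Defs.v *)
From mathcomp Require Import all_boot all_algebra.
Set Implicit Arguments. Unset Strict Implicit. Unset Printing Implicit Defensive.
Import GRing.Theory Num.Theory.
Local Open Scope ring_scope.

(* b-adic digit polynomial of N (for b >= 2): sum_i n_i X^i where
   n_i = (N %/ b^i) %% b is the i-th base-b digit of N.  N.+1 terms
   suffice since b^N > N for b >= 2 (higher digits vanish anyway). *)
Definition digit_poly (b N : nat) : {poly nat} :=
  \poly_(i < N.+1) ((N %/ b ^ i) %% b)%N.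

Definition invmodn (a N : nat) : nat := ((egcdn a N).1 %% N)%N.

Lemma invmodnP a N : (0 < a)%N -> coprime a N ->
  (a * invmodn a N = 1 %[mod N])%N.
Proof.
move=> a0 co; rewrite /invmodn modnMmr.
case: egcdnP => // km kn /= def _.
move: co; rewrite /coprime => /eqP g1.
by rewrite mulnC def g1 modnMDl.
Qed.

(* Main.v *)
Require Import Defs.
From mathcomp Require Import all_boot all_algebra.
From mathcomp Require Import zify ring lra.
Import GRing.Theory Num.Theory.

Section Helpers.
Local Open Scope ring_scope.

Lemma cong_cop (x t : int) (N : nat) :
  (N%:Z %| (x - t)%R)%Z -> coprimez x N%:Z = coprimez t N%:Z.
Proof.
move=> /dvdzP [c hc]; rewrite !(coprimez_sym _ N%:Z) /coprimez.
have -> : x = (c * N%:Z + t)%R by rewrite -hc; ring.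
by rewrite gcdzMDl.
Qed.

Lemma small_cop (d N : nat) (b : nat -> nat) :
  (forall i, (1 <= i <= d)%N -> coprime (b i) N) ->
  (forall i, (1 <= i <= d)%N -> b i = (b 1 + (i - 1))%N) ->
  forall m, (0 < m < d)%N -> coprime m N.
Proof.
move=> hc hb m /andP [m0 md].
set g := gcdn m N.
have g0 : (0 < g)%N by rewrite gcdn_gt0 m0.
have gm : (g <= m)%N by apply: dvdn_leq => //; apply: dvdn_gcdl.
set r := (b 1 %% g)%N.
have rg : (r < g)%N by rewrite ltn_mod.
pose i := if r == 0%N then 1%N else (1 + (g - r))%N.
have hi : (1 <= i <= d)%N by rewrite /i; case: eqP => _; lia.
have gbi : (g %| b i)%N.
  rewrite hb // /i; case: eqP => [r0|rn0].
    by rewrite subnn addn0 /dvdn -/r r0.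
  have -> : (b 1 + (1 + (g - r) - 1) = (b 1 %/ g).+1 * g)%N.
    rewrite {1}(divn_eq (b 1) g) -/r; lia.
  exact: dvdn_mull.
have : (g %| gcdn (b i) N)%N by rewrite dvdn_gcd gbi dvdn_gcdr.
by move: (hc i hi); rewrite /coprime => /eqP ->; rewrite dvdn1.
Qed.

Lemma small_copz (d N : nat) (b : nat -> nat) :
  (forall i, (1 <= i <= d)%N -> coprime (b i) N) ->
  (forall i, (1 <= i <= d)%N -> b i = (b 1 + (i - 1))%N) ->
  forall t : int, (t != 0)%R -> (`|t| < d)%N -> coprimez t N%:Z.
Proof.
move=> hc hb t t0 td; rewrite coprimezE absz_nat.
apply: (@small_cop d N b hc hb); by rewrite td andbT absz_gt0.
Qed.
End Helpers.

Theorem lemma2p13 (N d : nat) (b : nat -> nat) :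
  (* b_i >= 2 so that the b_i-adic digit polynomial is defined *)
  (forall i, (1 <= i <= d)%N -> (2 <= b i)%N) ->
  (* ceil(sqrt N / sqrt 2) <= b_i <= floor(sqrt N) *)
  (forall i, (1 <= i <= d)%N -> (N <= 2 * b i ^ 2)%N /\ (b i ^ 2 <= N)%N) ->
  (forall i, (1 <= i <= d)%N -> coprime (b i) N) ->
  (forall i, (1 <= i < d)%N -> b i.+1 = (b i).+1) ->
  let D := (b 1 + N %/ b d)%N in
  let n (k i : nat) : nat := ((digit_poly (b i) N)`_k)%R in
  (forall z, (z + 2 <= 2 * d)%N -> coprime (D + z) N) ->
  (forall i, (1 <= i <= d)%N -> (n 1%N i <= n 0%N i + 1)%N) ->
  (forall i, (1 <= i <= d)%N -> coprime (n 2%N i * b i) N) /\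
  (let b' j := if (j <= d)%N then b j
               else (n 0%N (j - d) * invmodn (n 2%N (j - d)) N
                       * invmodn (b (j - d)) N %% N)%N in
   forall j k, (1 <= j <= 2 * d)%N -> (1 <= k <= 2 * d)%N -> j <> k ->
     coprimez ((b' j)%:Z - (b' k)%:Z)%R (N%:Z)).
Proof.
move=> hb2 hbnd hcop hsucc D n hD hn.
have hb1 : forall i, (1 <= i <= d)%N -> b i = (b 1 + (i - 1))%N.
  elim=> [|i IH] // hi; have h2 : (i < d)%N by lia.
  case: i IH hi h2 => [|i] IH _ h2; first by rewrite addn0.
  rewrite hsucc; last by lia.
  rewrite IH; lia.
have Nlt : forall i, (1 <= i <= d)%N -> (N < 2 * b i ^ 2)%N.
  move=> i hi; have [h1 h2] := hbnd i hi.
  rewrite ltn_neqAle h1 andbT; apply/negP => /eqP E.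
  have := hcop i hi; rewrite E coprimeMr coprime_pexpr // /coprime gcdnn.
  case/andP => _ /eqP; have := hb2 i hi; lia.
have hN : forall i, (1 <= i <= d)%N -> (4 <= N)%N.
  move=> i hi; have [_ h2] := hbnd i hi; have := hb2 i hi.
  move=> h; apply: leq_trans h2; rewrite (_ : 4 = 2 ^ 2)%N // leq_exp2r //.
have hn0 : forall i, (1 <= i <= d)%N -> n 0%N i = (N %% b i)%N.
  by move=> i hi; rewrite /n /digit_poly coef_poly /= expn0 divn1.
have hq : forall i, (1 <= i <= d)%N -> (b i <= N %/ b i < 2 * b i)%N.
  move=> i hi; have [h1 h2] := hbnd i hi; have := Nlt i hi; have := hb2 i hi.
  move=> hb hl; have e : (b i * b i = b i ^ 2)%N by rewrite mulnn.
  rewrite leq_divRL; last lia. rewrite ltn_divLR; last lia.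
  by rewrite -mulnA e h2.
have hn1 : forall i, (1 <= i <= d)%N -> n 1%N i = (N %/ b i - b i)%N.
  move=> i hi; have := hN i hi => N4.
  rewrite /n /digit_poly coef_poly ifT; last by lia.
  rewrite expn1; have := hq i hi => /andP [q1 q2].
  rewrite -{1}(subnK q1) modnDr modn_small //; lia.
have hn2 : forall i, (1 <= i <= d)%N -> n 2%N i = 1%N.
  move=> i hi; have := hN i hi => N4; have [h1 h2] := hbnd i hi.
  have := Nlt i hi; have := hb2 i hi => hb hl.
  rewrite /n /digit_poly coef_poly ifT; last by lia.
  have -> : (N %/ b i ^ 2 = 1)%N.
    have bp : (0 < b i ^ 2)%N by rewrite expn_gt0; lia.
    apply/eqP; rewrite eqn_leq; apply/andP; split.
      by rewrite -ltnS ltn_divLR // mulnC.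
    by rewrite leq_divRL // mul1n.
  by rewrite modn_small.
have hf : forall i, (1 <= i < d)%N -> (N %/ b i = (N %/ b i.+1).+1)%N.
  move=> i hi; have hi' : (1 <= i <= d)%N by lia.
  have := hn i hi'; rewrite hn0 // hn1 //.
  have := hq i hi'; have := ltn_mod N (b i); have := divn_eq N (b i).
  have := hb2 i hi'; rewrite hsucc //.
  move: (b i) (N %/ b i) (N %% b i) => bb q r hbb e hr /andP [q1 q2] hc.
  rewrite e (_ : (q * bb + r = (q - 1) * bb.+1 + (r + bb + 1 - q))%N); last by nia.
  rewrite divnMDl // divn_small; lia.
have hf' : forall k i, (i + k = d)%N -> (1 <= i)%N -> (N %/ b i + i = N %/ b d + d)%N.
  elim=> [|k IH] i e h1; first by rewrite addn0 in e; rewrite e.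
  rewrite hf; last by lia.
  rewrite -(IH i.+1); [lia|lia|lia].
have hF : forall i, (1 <= i <= d)%N -> (N %/ b i + i = N %/ b d + d)%N.
  by move=> i hi; apply: (hf' (d - i)); lia.
have hkey : forall i, (1 <= i <= d)%N ->
    (N %| (N %% b i * invmodn 1 N * invmodn (b i) N %% N + N %/ b i))%N.
  move=> i hi; have hb := hb2 i hi; have hc := hcop i hi.
  have hN4 := hN i hi.
  rewrite -(@Gauss_dvdr N (b i)); last by rewrite coprime_sym.
  have e1 : (b i * (N %% b i * invmodn 1 N * invmodn (b i) N %% N) = N %% b i %[mod N])%N.
    rewrite modnMmr (_ : (b i * (N %% b i * invmodn 1 N * invmodn (b i) N)
       = N %% b i * (1 * invmodn 1 N) * (b i * invmodn (b i) N))%N); last by ring.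
    rewrite -modnMm (invmodnP _ hc); last by lia.
    rewrite modnMm muln1 -modnMmr (invmodnP _ (coprime1n N)) //.
    by rewrite modnMmr muln1.
  rewrite /dvdn mulnDr -modnDml e1 modnDml mulnC addnC -divn_eq modnn //.
split.
  by move=> i hi; rewrite hn2 // mul1n; exact: hcop i hi.
move=> b' j k hj hk hjk.
pose g j := if (j <= d)%N then Posz (b j) else (- Posz (N %/ b (j - d)%N))%R.
have hg : forall j, (1 <= j <= 2 * d)%N -> (Posz N %| (Posz (b' j) - g j)%R)%Z.
  move=> j0 hj0; rewrite /b' /g; case: ifP => hjd; first by rewrite subrr dvdz0.
  have hi : (1 <= j0 - d <= d)%N by lia.
  rewrite hn0 // hn2 // opprK dvdzE -PoszD absz_nat; exact: hkey.
rewrite (@cong_cop _ (g j - g k)%R); last first.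
  rewrite (_ : (Posz (b' j) - Posz (b' k) - (g j - g k) = (Posz (b' j) - g j) - (Posz (b' k) - g k))%R); last by ring.
  by rewrite rpredB // hg.
have Dz : forall z, (z + 2 <= 2 * d)%N -> coprimez (Posz (D + z)%N) (Posz N).
  by move=> z hz; rewrite coprimezE absz_nat; apply: hD.
clear hg hkey hf hf' hq hn1 hn0 hn2 hn Nlt hN hbnd hb2 b' n.
rewrite /g; case: ifP => hjd; case: ifP => hkd.
- apply: (@small_copz d N b hcop hb1).
  + rewrite (hb1 j) ?(hb1 k); [|lia|lia]. apply/eqP; lia.
  + rewrite (hb1 j) ?(hb1 k); [|lia|lia]. lia.
- have hi : (1 <= k - d <= d)%N by lia.
  have := hF _ hi; have := hb1 j ltac:(lia); rewrite /D in Dz.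
  move: (N %/ b (k - d)) (N %/ b d) (b j) (b 1) Dz => x y bj b1 Dz h1 h2.
  rewrite (_ : (Posz bj - - Posz x = Posz (b1 + y + ((j - 1) + (d - (k - d))))%N)%R); last by lia.
  apply: Dz; lia.
- have hi : (1 <= j - d <= d)%N by lia.
  rewrite -opprB coprimeNz.
  have := hF _ hi; have := hb1 k ltac:(lia); rewrite /D in Dz.
  move: (N %/ b (j - d)) (N %/ b d) (b k) (b 1) Dz => x y bj b1 Dz h1 h2.
  rewrite (_ : (Posz bj - - Posz x = Posz (b1 + y + ((k - 1) + (d - (j - d))))%N)%R); last by lia.
  apply: Dz; lia.
- have hi : (1 <= j - d <= d)%N by lia.
  have hi' : (1 <= k - d <= d)%N by lia.
  have := hF _ hi; have := hF _ hi'.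
  move: (N %/ b (j - d)) (N %/ b (k - d)) (N %/ b d) => x y w h1 h2.
  apply: (@small_copz d N b hcop hb1).
  + apply/eqP; lia.
  + lia.
Qed.
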